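(* Assume $U_1>2U_2$, $0<\varepsilon\ll U_2$ and $U_2/\varepsilon\notin\mathbb N$. Let $(\bar\eta,\eta)$ be a move with $\bar\eta\in\mathcal B$. If $\Delta s:=s(\eta)-s(\bar\eta)\ge3$, $p_{min}(\eta)\ge4$ and $p_2(\bar\eta)\ge\ell_2^*$, then either $\eta\in\mathcal B$, or $\eta\notin\mathcal B$ and $H(\bar\eta)>\Gamma$.
   Context: Let $L\in\mathbb N$, $\Lambda=\{0,\dots,L\}^2$, $\partial^-\Lambda=\{x\in\Lambda:\exists y\notin\Lambda,\ |y-x|=1\}$, $\Lambda_0=\Lambda\setminus\partial^-\Lambda$, configurations $\eta\in\{0,1\}^\Lambda$ with energy $H(\eta)=-U_1\sum_{(x,y)\in\Lambda^*_{0,h}}\eta(x)\eta(y)-U_2\sum_{(x,y)\in\Lambda^*_{0,v}}\eta(x)\eta(y)+\Delta\sum_{x\in\Lambda}\eta(x)$, with $\Lambda^*_{0,h}$ ($\Lambda^*_{0,v}$) the horizontal (vertical) unoriented nearest-neighbour bonds inside $\Lambda_0$, $U_1,U_2,\Delta>0$. $\varepsilon=U_1+U_2-\Delta$, $\ell_2^*=\lceil U_2/\varepsilon\rceil$, $s^*=3\ell_2^*-1$, $\Gamma=U_1\ell_2^*+2U_2\ell_2^*+U_1-U_2-2\varepsilon(\ell_2^* )^2+3\varepsilon\ell_2^*-2\varepsilon$. A move is a pair $(\bar\eta,\eta)$ with $\eta\ne\bar\eta$ obtained from $\bar\eta$ by exchanging the values at two nearest-neighbour sites of $\Lambda$, or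 by setting the value at some site of $\partial^-\Lambda$ to $0$, or setting it to $1$. Geometry: a free particle is an occupied site in $\partial^-\Lambda$ or an occupied site of $\Lambda_0$ with no occupied nearest neighbour in $\Lambda_0$; $n(\eta)$ is the number of free particles; $\eta_{cl}$ is the set of occupied sites of $\Lambda_0$ that are not free. $C(\eta_{cl})$ is the union of closed unit squares centred at sites of $\eta_{cl}$; $p_1$ ($p_2$) is the number of columns (rows) of $\mathbb Z^2$ meeting $C(\eta_{cl})$; $s=p_1+p_2$; $v=p_1p_2-|\eta_{cl}|$; $p_{min}=\min\{p_1,p_2\}$, $p_{max}=\max\{p_1,p_2\}$. $\mathcal B$ is the set of $\eta$ such that: $s(\eta)\le s^*-2$; or $s(\eta)\ge s^*-1$ and $p_2(\eta)\le\ell_2^*-1$; or $s(\eta)=s^*-1$, $p_2(\eta)\ge\ell_2^*$ and $v(\eta)\ge p_{min}(\eta)-1$; or $s(\eta)\ge s^*$, $p_2(\eta)=\ell_2^*$ and $v(\eta)\ge p_{max}(\eta)-1$. *)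

(* Defs.v *)
From HB Require Import structures.
From mathcomp Require Import all_boot all_order all_algebra.
From mathcomp Require Import reals.
Set Implicit Arguments. Unset Strict Implicit. Unset Printing Implicit Defensive.
Import Order.TTheory GRing.Theory Num.Theory.
Local Open Scope ring_scope.

(* Lambda = {0..L}^2 ; a site is a pair (x.1, x.2) = (column index, row index). *)
Definition site (L : nat) : finType := ('I_L.+1 * 'I_L.+1)%type.
Definition config (L : nat) := {ffun site L -> bool}.

(* internal boundary: sites with a nearest neighbour of Z^2 outside Lambda *)
Definition boundary (L : nat) (x : site L) : bool :=
  [|| (x.1 : nat) == 0%N, (x.1 : nat) == L, (x.2 : nat) == 0%N | (x.2 : nat) == L].
Definition interior (L : nat) (x : site L) : bool := ~~ boundary x.

Definition hstep (L : nat) (x y : site L) : bool :=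
  ((x.2 : nat) == y.2) && ((x.1 : nat).+1 == y.1).
Definition vstep (L : nat) (x y : site L) : bool :=
  ((x.1 : nat) == y.1) && ((x.2 : nat).+1 == y.2).
Definition nbr (L : nat) (x y : site L) : bool :=
  [|| hstep x y, hstep y x, vstep x y | vstep y x].

(* energy: each unoriented bond of Lambda_0 counted once via its oriented representative *)
Definition energy (R : realType) (U1 U2 Delta : R) (L : nat) (eta : config L) : R :=
  - U1 * (\sum_(p : site L * site L | [&& hstep p.1 p.2, interior p.1 & interior p.2])
            (eta p.1 && eta p.2)%:R)
  - U2 * (\sum_(p : site L * site L | [&& vstep p.1 p.2, interior p.1 & interior p.2])
            (eta p.1 && eta p.2)%:R)
  + Delta * (\sum_(x : site L) (eta x)%:R).

Definition swap_conf (L : nat) (eta : config L) (x y : site L) : config L :=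
  [ffun z => if z == x then eta y else if z == y then eta x else eta z].
Definition set_conf (L : nat) (eta : config L) (x : site L) (b : bool) : config L :=
  [ffun z => if z == x then b else eta z].
Definition move (L : nat) (etab eta : config L) : Prop :=
  eta <> etab /\
  ((exists x y : site L, nbr x y /\ eta = swap_conf etab x y) \/
   (exists x : site L, boundary x /\ (eta = set_conf etab x false \/ eta = set_conf etab x true))).

Definition free (L : nat) (eta : config L) (x : site L) : bool :=
  eta x && (boundary x || (interior x && [forall y, ~~ [&& nbr x y, interior y & eta y]])).
Definition cl (L : nat) (eta : config L) : {set site L} :=
  [set x | [&& eta x, interior x & ~~ free eta x]].
(* number of columns / rows met by C(eta_cl) = size of horizontal / vertical projections *)
Definition p1 (L : nat) (eta : config L) : nat := #|[set x.1 | x in cl eta]|.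
Definition p2 (L : nat) (eta : config L) : nat := #|[set x.2 | x in cl eta]|.
Definition sz (L : nat) (eta : config L) : nat := (p1 eta + p2 eta)%N.
Definition vv (L : nat) (eta : config L) : int := (p1 eta * p2 eta)%:Z - (#|cl eta|)%:Z.
Definition pmin (L : nat) (eta : config L) : nat := minn (p1 eta) (p2 eta).
Definition pmax (L : nat) (eta : config L) : nat := maxn (p1 eta) (p2 eta).

Definition epsilon (R : realType) (U1 U2 Delta : R) : R := U1 + U2 - Delta.
Definition ell2 (R : realType) (U1 U2 Delta : R) : int := Num.ceil (U2 / epsilon U1 U2 Delta).
Definition sstar (R : realType) (U1 U2 Delta : R) : int := 3 * ell2 U1 U2 Delta - 1.
Definition Gamma (R : realType) (U1 U2 Delta : R) : R :=
  let l : R := (ell2 U1 U2 Delta)%:~R in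
  let e := epsilon U1 U2 Delta in
  U1 * l + 2 * U2 * l + U1 - U2 - 2 * e * l ^+ 2 + 3 * e * l - 2 * e.

Definition inB (R : realType) (U1 U2 Delta : R) (L : nat) (eta : config L) : bool :=
  let l := ell2 U1 U2 Delta in
  let ss := sstar U1 U2 Delta in
  let s : int := (sz eta)%:Z in
  let q2 : int := (p2 eta)%:Z in
  [|| s <= ss - 2,
      (ss - 1 <= s) && (q2 <= l - 1),
      [&& s == ss - 1, l <= q2 & (pmin eta)%:Z - 1 <= vv eta]
    | [&& ss <= s, q2 == l & (pmax eta)%:Z - 1 <= vv eta]].

(* Main.v *)
Require Import Defs.
From HB Require Import structures.
From mathcomp Require Import all_boot all_order all_algebra.
From mathcomp Require Import reals lra zify.
Import Order.TTheory GRing.Theory Num.Theory.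
Local Open Scope ring_scope.


Lemma realA (R : realType) (U1 U2 e A B N Lr : R) :
  0 < U2 -> 2 * U2 < U1 -> 0 < e -> e < U2 ->
  U2 <= e * Lr -> e * (Lr - 1) < U2 ->
  Lr <= B -> A + B <= 3 * Lr - 2 -> N <= A * B ->
  U1 * Lr + 2 * U2 * Lr + U1 - U2 - 2 * e * Lr ^+ 2 + 3 * e * Lr - 2 * e
   < U1 * B + U2 * A - e * N + 2 * (U1 + U2 - e).
Proof.
move=> h1 h2 h3 h4 h5 h6 h7 h8 h9.
have P0 : e * N <= e * (A * B) by rewrite ler_pM2l.
have P1 : 0 <= (3 * Lr - 2 - B - A) * (e * B - U2).
  apply: mulr_ge0; first lra.
  have : e * Lr <= e * B by rewrite ler_pM2l.
  lra.
have P2 : 0 <= (B - Lr) * (U2 - e * (Lr - 2)) by apply: mulr_ge0; lra.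
have P3 : 0 <= e * ((B - Lr) * (B - Lr)) by apply: mulr_ge0 => //; [lra | apply: mulr_ge0; lra].
have P4 : 0 <= (B - Lr) * (U1 - 2 * U2) by apply: mulr_ge0; lra.
rewrite expr2.
nra.
Qed.

Lemma realB (R : realType) (U1 U2 e A N Lr : R) :
  0 < U2 -> 2 * U2 < U1 -> 0 < e -> e < U2 ->
  U2 <= e * Lr -> e * (Lr - 1) < U2 ->
  3 * Lr - 1 <= A + Lr -> N + A <= A * Lr + 1 ->
  U1 * Lr + 2 * U2 * Lr + U1 - U2 - 2 * e * Lr ^+ 2 + 3 * e * Lr - 2 * e
   < U1 * Lr + U2 * A - e * N + 2 * (U1 + U2 - e).
Proof.
move=> h1 h2 h3 h4 h5 h6 h7 h8.
have P0 : e * (N + A) <= e * (A * Lr + 1) by rewrite ler_pM2l.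
have P1 : 0 <= (A - (2 * Lr - 1)) * (U2 - e * (Lr - 1)) by apply: mulr_ge0; lra.
rewrite expr2.
nra.
Qed.

Lemma inB_cases (a b N pm : nat) (l : int) :
  [|| (a + b)%N%:Z <= 3 * l - 1 - 2,
        (3 * l - 1 - 1 <= (a + b)%N%:Z) && (b%:Z <= l - 1),
        [&& (a + b)%N%:Z == 3 * l - 1 - 1, l <= b%:Z
          & pm%:Z - 1 <= (a * b)%N%:Z - N%:Z]
      | [&& 3 * l - 1 <= (a + b)%N%:Z, b%:Z == l & (maxn a b)%:Z - 1 <= (a * b)%N%:Z - N%:Z]] ->
  l <= b%:Z ->
  (a%:Z + b%:Z <= 3 * l - 2) \/ (b%:Z = l /\ (N + a <= a * b + 1)%N /\ 3 * l - 1 <= a%:Z + b%:Z).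
Proof.
move=> hB hl.
case/or4P: hB.
- by move=> h; left; lia.
- by move=> /andP [_ h]; exfalso; lia.
- by move=> /and3P [/eqP h _ _]; left; lia.
- move=> /and3P [h1 /eqP h2 h3]; right; split => //; split; last by lia.
  lia.
Qed.

Lemma bond_card (T K : finType) (C : {set T}) (st : rel T) (key : T -> K) (pos : T -> nat) :
  (forall a b, st a b -> key a = key b /\ pos b = (pos a).+1) ->
  (forall a b b', st a b -> st a b' -> b = b') ->
  (#|[set p : T * T | [&& st p.1 p.2, p.1 \in C & p.2 \in C]]| + #|key @: C| <= #|C|)%N.
Proof.
move=> Hst Huniq.
set P := [set p : T * T | _].
set A := [set p.1 | p in P].
have cardA : #|A| = #|P|.
  apply: card_in_imset => -[a b] [a' b'] /=.
  rewrite !inE /= => /and3P [h1 _ _] /and3P [h2 _ _] ea; subst a'.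
  by rewrite (Huniq _ _ _ h1 h2).
have AC : A \subset C.
  apply/subsetP => a /imsetP [[a0 b0]] /=; rewrite inE /= => /and3P [_ h _] ->; done.
have key_sub : key @: C \subset key @: (C :\: A).
  apply/subsetP => r /imsetP [c cC ->].
  pose Q : pred T := fun z => (z \in C) && (key z == key c).
  have Pc : Q c by rewrite /Q /= cC eqxx.
  case: (arg_maxnP pos Pc) => m /andP [mC /eqP km] mmax.
  apply/imsetP; exists m; last by rewrite km.
  rewrite inE mC andbT; apply/negP => /imsetP [[a b]] /=; rewrite inE /= => /and3P [sab _ bC] ea.
  subst a.
  have [kb pb] := Hst _ _ sab.
  have := mmax b; rewrite /Q bC -kb km eqxx => /(_ isT).
  by rewrite pb /= ltnn.
have := subset_leq_card key_sub.
have := leq_imset_card key (C :\: A).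
rewrite cardsDS // cardA.
have := subset_leq_card AC; rewrite cardA.
move=> h1 h2 h3.
have h4 := leq_trans h3 h2.
by rewrite -(subnK h1) addnC leq_add2r.
Qed.

Lemma nbr_sym L (x y : site L) : nbr x y = nbr y x.
Proof. by rewrite /nbr; case: (hstep x y); case: (hstep y x); case: (vstep x y); case: (vstep y x). Qed.

Lemma in_cl L (e : config L) x :
  (x \in cl e) = [&& e x, interior x & [exists y, [&& nbr x y, interior y & e y]]].
Proof.
rewrite inE /Defs.free /interior.
case: (e x) => //=; case: (boundary x) => //=.
by rewrite negb_forall; apply: eq_existsb => y; rewrite negbK.
Qed.

Lemma bond_sum (R : realType) L (e : config L) (st : rel (site L)) :
  (forall a b, st a b -> nbr a b) ->
  \sum_(p : site L * site L | [&& st p.1 p.2, interior p.1 & interior p.2]) ((e p.1 && e p.2)%:R : R)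
  = (#|[set p : site L * site L | [&& st p.1 p.2, p.1 \in cl e & p.2 \in cl e]]|)%:R.
Proof.
move=> Hn.
rewrite -natr_sum; congr (_ %:R).
rewrite (eq_bigr (fun p => if e p.1 && e p.2 then 1%N else 0%N)); last by move=> p _; case: (_ && _).
rewrite -big_mkcondr /= sum1_card.
apply: eq_card => -[a b]; rewrite [RHS]in_set /= !in_cl unfold_in /=.
apply/idP/idP.
  case/andP => /and3P [sab ia ib] /andP [ea eb].
  rewrite sab ea eb ia ib /=; apply/andP; split; apply/existsP.
    by exists b; rewrite (Hn _ _ sab) ib eb.
  by exists a; rewrite nbr_sym (Hn _ _ sab) ia ea.
by case/and5P => -> /and3P [-> -> _] -> -> _.
Qed.

Lemma hstep_bond L (e : config L) :
  (#|[set p : site L * site L | [&& hstep p.1 p.2, p.1 \in cl e & p.2 \in cl e]]| + p2 e <= #|cl e|)%N.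
Proof.
apply: (@bond_card _ _ (cl e) (@hstep L) snd (fun x => (x.1 : nat))).
  move=> a b /andP [/eqP h1 /eqP h2]; split => //; exact: val_inj.
move=> a b b' /andP [/eqP h1 /eqP h2] /andP [/eqP h3 /eqP h4].
case: b b' h1 h2 h3 h4 => [b1 b2] [b1' b2'] /= h1 h2 h3 h4.
by congr pair; apply: val_inj; rewrite /= -?h1 -?h2 -?h3 -?h4.
Qed.

Lemma vstep_bond L (e : config L) :
  (#|[set p : site L * site L | [&& vstep p.1 p.2, p.1 \in cl e & p.2 \in cl e]]| + p1 e <= #|cl e|)%N.
Proof.
apply: (@bond_card _ _ (cl e) (@vstep L) fst (fun x => (x.2 : nat))).
  move=> a b /andP [/eqP h1 /eqP h2]; split => //; exact: val_inj.
move=> a b b' /andP [/eqP h1 /eqP h2] /andP [/eqP h3 /eqP h4].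
case: b b' h1 h2 h3 h4 => [b1 b2] [b1' b2'] /= h1 h2 h3 h4.
by congr pair; apply: val_inj; rewrite /= -?h1 -?h2 -?h3 -?h4.
Qed.

Lemma card_cl L (e : config L) : (#|cl e| <= p1 e * p2 e)%N.
Proof.
rewrite /p1 /p2 -cardsX; apply: subset_leq_card; apply/subsetP => -[a b] h.
by rewrite in_setX; apply/andP; split; apply/imsetP; exists (a, b).
Qed.

Lemma count_part (R : realType) L (e : config L) u w :
  u != w -> e u -> e w -> u \notin cl e -> w \notin cl e ->
  ((#|cl e| + 2)%:R : R) <= \sum_(x : site L) ((e x)%:R : R).
Proof.
move=> uw eu ew uc wc.
rewrite -natr_sum ler_nat.
have -> : (\sum_(x : site L) (e x : nat) = #|[set x | e x]|)%N.
  rewrite (eq_bigr (fun x => if e x then 1%N else 0%N)); last by move=> x _; case: (e x).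
  by rewrite -big_mkcond /= sum1_card cardsE.
have sub : u |: (w |: cl e) \subset [set x | e x].
  apply/subsetP => x; rewrite !in_setU1 [in X in _ -> X]in_set => /orP [/eqP -> // | /orP [/eqP -> // | ]].
  by rewrite in_cl => /andP [].
apply: leq_trans (subset_leq_card sub).
rewrite !cardsU1 in_setU1 negb_or uw uc wc /=.
by rewrite addnC.
Qed.


Lemma energy_lb (R : realType) (U1 U2 Delta : R) L (e : config L) u w :
  0 <= U1 -> 0 <= U2 -> 0 <= Delta ->
  u != w -> e u -> e w -> u \notin cl e -> w \notin cl e ->
  U1 * (p2 e)%:R + U2 * (p1 e)%:R - epsilon U1 U2 Delta * (#|cl e|)%:R + 2 * Delta
  <= energy U1 U2 Delta e.
Proof.
move=> hU1 hU2 hD uw eu ew uc wc.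
have Np := @count_part R L e u w uw eu ew uc wc.
rewrite /energy (@bond_sum R L e (@hstep L)); last by move=> a b h; rewrite /nbr h.
rewrite (@bond_sum R L e (@vstep L)); last by move=> a b h; rewrite /nbr h !orbT.
have Bh := @hstep_bond L e; have Bv := @vstep_bond L e.
set bh := #|_| in Bh *; set bv := #|_| in Bv *.
set N := #|cl e| in Bh Bv Np *.
have Bh' : (bh%:R : R) + (p2 e)%:R <= N%:R by rewrite -natrD ler_nat.
have Bv' : (bv%:R : R) + (p1 e)%:R <= N%:R by rewrite -natrD ler_nat.
rewrite natrD in Np.
set S := \sum_(x : site L) _ in Np *.
have h1 : U1 * (bh%:R + (p2 e)%:R) <= U1 * N%:R by rewrite ler_wpM2l.
have h2 : U2 * (bv%:R + (p1 e)%:R) <= U2 * N%:R by rewrite ler_wpM2l.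
have h3 : Delta * (N%:R + 2%:R) <= Delta * S by rewrite ler_wpM2l.
rewrite /epsilon.
nra.
Qed.

Lemma nbr_coord L (a b : site L) : nbr a b -> a.1 = b.1 \/ a.2 = b.2.
Proof.
rewrite /nbr /hstep /vstep => /or4P [] /andP [/eqP h _].
- by right; apply: val_inj.
- by right; apply: val_inj.
- by left; apply: val_inj.
- by left; apply: val_inj.
Qed.

Lemma new_cl L (e0 e : config L) x y z :
  e x = false -> e0 x -> (forall z, z != x -> z != y -> e z = e0 z) ->
  z \in cl e -> z \notin cl e0 -> z != y ->
  [/\ e0 z, z != x & (z.1 = y.1 \/ z.2 = y.2)].
Proof.
move=> hx hx0 hoth; rewrite !in_cl => /and3P [ez iz /existsP [w /and3P [nzw iw ew]]] nc zy.
have zx : z != x by apply: contraTneq ez => ->; rewrite hx.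
have e0z : e0 z by rewrite -hoth.
split => //.
have [wy | wy] := eqVneq w y; first by subst w; exact: nbr_coord.
have [wx | wx] := eqVneq w x; first by subst w; rewrite hx in ew.
move: nc; rewrite e0z iz /= => /existsPn /(_ w).
by rewrite nzw iw -(hoth w wx wy) ew.
Qed.

Lemma imset_card1 (T K : finType) (f : T -> K) (A : {set T}) y :
  #|f @: (y |: A)| = ((f y \notin f @: A) + #|f @: A|)%N.
Proof. by rewrite imsetU1 cardsU1. Qed.

Lemma imset_card2 (T K : finType) (f : T -> K) (A : {set T}) y z :
  #|f @: (y |: (z |: A))| = ((f y \notin f z |: f @: A) + ((f z \notin f @: A) + #|f @: A|))%N.
Proof. by rewrite !imsetU1 !cardsU1. Qed.

Definition two_free L (e0 : config L) :=
  exists u w, [/\ u != w, e0 u, e0 w, u \notin cl e0 & w \notin cl e0].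

Lemma arith2 (a b a0 b0 i k : nat) : (a <= i + a0 -> b <= k + b0 -> i <= 1 -> k <= 1 -> a + b <= (a0 + b0).+2)%N.
Proof. lia. Qed.

Lemma arith4 (a b a0 b0 i j k l : nat) : (a <= i + (j + a0) -> b <= k + (l + b0) -> i + j + k + l <= 2 -> a + b <= (a0 + b0).+2)%N.
Proof. lia. Qed.

Lemma swap_case L (e0 e : config L) x y :
  e x = false -> e y -> e0 x -> (forall z, z != x -> z != y -> e z = e0 z) ->
  x.1 = y.1 \/ x.2 = y.2 ->
  (sz e <= (sz e0).+2)%N \/ @two_free L e0.
Proof.
move=> hx hy hx0 hoth hxy.
have hp : forall T : {set site L}, cl e \subset T ->
   (p1 e <= #|[set x.1 | x in T]|)%N /\ (p2 e <= #|[set x.2 | x in T]|)%N.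
  by move=> T sT; split; apply: subset_leq_card; apply: imsetS.
have [sub1 | nsub1] := boolP (cl e \subset y |: cl e0).
  left; have [h1 h2] := hp _ sub1.
  rewrite !imset_card1 in h1 h2.
  have {h1} h1 : (p1 e <= (y.1 \notin [set x.1 | x in cl e0]) + p1 e0)%N := h1.
  have {h2} h2 : (p2 e <= (y.2 \notin [set x.2 | x in cl e0]) + p2 e0)%N := h2.
  rewrite /sz; apply: (@arith2 _ _ _ _ _ _ h1 h2); exact: leq_b1.
have [z zc zn] := subsetPn nsub1.
move: zn; rewrite in_setU1 negb_or => /andP [zy zS].
have [e0z zx zcoord] := @new_cl L e0 e x y z hx hx0 hoth zc zS zy.
have [xS | xS] := boolP (x \in cl e0); last first.
  by right; exists x, z; split => //; rewrite eq_sym.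
have [sub2 | nsub2] := boolP (cl e \subset y |: (z |: cl e0)).
  left; have [h1 h2] := hp _ sub2.
  rewrite !imset_card2 in h1 h2.
  have {h1} h1 : (p1 e <= (y.1 \notin z.1 |: [set x.1 | x in cl e0]) + ((z.1 \notin [set x.1 | x in cl e0]) + p1 e0))%N := h1.
  have {h2} h2 : (p2 e <= (y.2 \notin z.2 |: [set x.2 | x in cl e0]) + ((z.2 \notin [set x.2 | x in cl e0]) + p2 e0))%N := h2.
  have x1S : x.1 \in [set x.1 | x in cl e0] by apply/imsetP; exists x.
  have x2S : x.2 \in [set x.2 | x in cl e0] by apply/imsetP; exists x.
  rewrite /sz; apply: (@arith4 _ _ _ _ _ _ _ _ h1 h2).
  case: hxy => [e1 | e2].
    have -> : (y.1 \notin z.1 |: [set x.1 | x in cl e0]) = false by rewrite in_setU1 -e1 x1S orbT.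
    case: zcoord => [f1 | f2].
      have -> : (z.1 \notin [set x.1 | x in cl e0]) = false by rewrite f1 -e1 x1S.
      by rewrite /=; case: (_ \notin _); case: (_ \notin _).
    have -> : (y.2 \notin z.2 |: [set x.2 | x in cl e0]) = false by rewrite in_setU1 f2 eqxx.
    by rewrite /=; case: (_ \notin _); case: (_ \notin _).
  have -> : (y.2 \notin z.2 |: [set x.2 | x in cl e0]) = false by rewrite in_setU1 -e2 x2S orbT.
  case: zcoord => [f1 | f2].
    have -> : (y.1 \notin z.1 |: [set x.1 | x in cl e0]) = false by rewrite in_setU1 f1 eqxx.
    by rewrite /=; case: (_ \notin _); case: (_ \notin _).
  have -> : (z.2 \notin [set x.2 | x in cl e0]) = false by rewrite f2 -e2 x2S.
  by rewrite /= addn0; case: (_ \notin _); case: (_ \notin _).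
have [z' zc' zn'] := subsetPn nsub2.
move: zn'; rewrite !in_setU1 !negb_or => /and3P [zy' zz' zS'].
have [e0z' _ _] := @new_cl L e0 e x y z' hx hx0 hoth zc' zS' zy'.
by right; exists z, z'; split => //; rewrite eq_sym.
Qed.

Lemma set_case L (e0 e : config L) x :
  boundary x -> (forall z, z != x -> e z = e0 z) -> (sz e <= sz e0)%N.
Proof.
move=> bx hoth.
have sub : cl e \subset cl e0.
  apply/subsetP => z; rewrite !in_cl => /and3P [ez iz /existsP [w /and3P [nzw iw ew]]].
  have nx : forall v, interior v -> v != x.
    by move=> v iv; apply: contraNneq iv => ->; rewrite /interior bx.
  rewrite -hoth ?nx // ez iz /=; apply/existsP; exists w.
  by rewrite nzw iw -hoth ?nx.
by rewrite /sz leq_add // subset_leq_card // imsetS.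
Qed.

Lemma move_case L (e0 e : config L) :
  move e0 e -> (sz e <= (sz e0).+2)%N \/ @two_free L e0.
Proof.
case=> ne [[x [y [nxy E]]] | [x [bx hset]]]; last first.
  left; apply: leq_trans (leqnSn _) _; apply: leq_trans (leqnSn _).
  by case: hset => -> ; apply: (@set_case L e0 _ x bx) => z zx; rewrite /swap_conf ffunE (negbTE zx).
subst e.
have hoth : forall z, z != x -> z != y -> swap_conf e0 x y z = e0 z.
  by move=> z zx zy; rewrite /swap_conf ffunE (negbTE zx) (negbTE zy).
have hc := @nbr_coord L x y nxy.
case Ex: (e0 x); case Ey: (e0 y).
- by exfalso; apply: ne; apply/ffunP => z; rewrite /swap_conf ffunE; case: eqP => [->|_]; [rewrite Ex Ey | case: eqP => [->|_]; rewrite ?Ex ?Ey].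
- have yx : y != x by apply: contraFneq Ey => ->.
  apply: (@swap_case L e0 _ x y) => //.
  + by rewrite /swap_conf ffunE eqxx.
  + by rewrite /swap_conf ffunE (negbTE yx) eqxx.
- have yx : y != x by apply: contraTneq Ey => ->; rewrite Ex.
  apply: (@swap_case L e0 _ y x) => //.
  + by rewrite /swap_conf ffunE (negbTE yx) eqxx.
  + by rewrite /swap_conf ffunE eqxx.
  + by move=> z zy zx; apply: hoth.
  + by case: hc => ->; [left | right].
- by exfalso; apply: ne; apply/ffunP => z; rewrite /swap_conf ffunE; case: eqP => [->|_]; [rewrite Ex Ey | case: eqP => [->|_]; rewrite ?Ex ?Ey].
Qed.

Theorem proposition4p3 (R : realType) (U1 U2 : R) :
  0 < U2 -> 2 * U2 < U1 ->
  exists eps0 : R, 0 < eps0 /\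
  forall Delta : R, 0 < Delta ->
    0 < epsilon U1 U2 Delta -> epsilon U1 U2 Delta < eps0 ->
    (forall n : nat, U2 / epsilon U1 U2 Delta != n%:R) ->
  forall (L : nat) (etab eta : config L),
    move etab eta ->
    inB U1 U2 Delta etab ->
    (3 <= (sz eta)%:Z - (sz etab)%:Z)%R ->
    (4 <= pmin eta)%N ->
    ell2 U1 U2 Delta <= (p2 etab)%:Z ->
    inB U1 U2 Delta eta \/
    (~~ inB U1 U2 Delta eta /\ Gamma U1 U2 Delta < energy U1 U2 Delta etab).
Proof.
move=> hU2 hU1; exists U2; split => // Delta hD he he0 _ L etab eta hmove hB hds _ hl.
have [iB | niB] := boolP (inB U1 U2 Delta eta); [by left | right; split => //].
have [hsz | [u [w [uw eu ew uc wc]]]] := @move_case L etab eta hmove.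
  exfalso; move: hds hsz; lia.
have hU1p : 0 <= U1 by lra.
have hE := @energy_lb R U1 U2 Delta L etab u w hU1p (ltW hU2) (ltW hD) uw eu ew uc wc.
apply: lt_le_trans hE.
set e := epsilon U1 U2 Delta in he he0 *.
rewrite /Gamma -/e.
set l := ell2 U1 U2 Delta in hl hB *.
have hl1 : U2 <= e * l%:~R.
  have := Num.Theory.ceil_ge (U2 / e); rewrite -/(ell2 U1 U2 Delta) -/l.
  by rewrite ler_pdivrMr // mulrC.
have hl2 : e * (l%:~R - 1) < U2.
  have := Num.Theory.ceilB1_lt (U2 / e); rewrite -/(ell2 U1 U2 Delta) -/l.
  by rewrite ltr_pdivlMr // mulrC intrB.
have hDe : Delta = U1 + U2 - e by rewrite /e /epsilon; lra.
rewrite hDe.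
have hN := @card_cl L etab.
move: hB hl hN; rewrite /inB /sstar -/l /vv /pmax /sz.
set a := p1 etab; set b := p2 etab; set N := #|cl etab|.
move=> hB hl hN.
clearbody a b N l.
have hNr : (N%:R : R) <= a%:R * b%:R by rewrite -natrM ler_nat.
have hlr : (l%:~R : R) <= b%:R by rewrite pmulrn ler_int.
have [hA | hBB] := @inB_cases a b N (pmin etab) l hB hl.
- have hAr : (a%:R : R) + b%:R <= 3 * l%:~R - 2.
    have := hA; rewrite -(ler_int R) intrD intrB intrM -!pmulrn //.
  exact: (@realA R U1 U2 e a%:R b%:R N%:R l%:~R).
- case: hBB => hb [hna hs].
  have hbr : (b%:R : R) = l%:~R by rewrite -hb -pmulrn.
  rewrite hbr.
  apply: (@realB R U1 U2 e a%:R N%:R l%:~R) => //.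
    have := hs; rewrite -(ler_int R) intrD intrB intrM -!pmulrn -hb -pmulrn //.
  have := hna; rewrite -(ler_nat R) !natrD natrM mulr1n hbr //.
Qed.
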